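(* Let $f:\mathbb{Z}\times\mathbb{Z}\to\mathbb{C}$ satisfy, for all $m,n,l\in\mathbb{Z}$, $f(m,n)-f(n,m)=n-m$ and $(n-m)f(m+n,l)=f(n,l)f(m,n+l)-f(m,l)f(n,m+l)$. Then $f(m,0)=f(0,0)$ for all $m\in\mathbb{Z}$.
   Context: These two identities are exactly the conditions for $x_mx_n=f(m,n)x_{m+n}$ to be a left-symmetric algebra structure on the Witt algebra (basis $\{x_n\}$, $[x_m,x_n]=(n-m)x_{m+n}$) with commutator equal to the Witt bracket. *)

(* Defs.v *)
From mathcomp Require Import all_boot all_order all_algebra.
From mathcomp Require Import complex.
From mathcomp Require Import reals.

(* Main.v *)
Require Import Defs.
From mathcomp Require Import all_boot all_order all_algebra.
From mathcomp Require Import complex.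
From mathcomp Require Import reals.
From mathcomp Require Import ring.
Import GRing.Theory Num.Theory.
Local Open Scope ring_scope.
Local Open Scope complex_scope.

Lemma lc1 (R : comNzRingType) (X P k : R) : X = 0 -> P = k * X -> P = 0.
Proof. by move=> -> ->; rewrite mulr0. Qed.

Lemma lc2 (R : comNzRingType) (X1 X2 P l1 l2 : R) :
  X1 = 0 -> X2 = 0 -> P = l1 * X1 + l2 * X2 -> P = 0.
Proof. by move=> -> -> ->; rewrite !mulr0 addr0. Qed.

Lemma lc6 (R : comNzRingType) (l1 l2 l3 l4 l5 l6 X1 X2 X3 X4 X5 X6 P : R) :
  X1 = 0 -> X2 = 0 -> X3 = 0 -> X4 = 0 -> X5 = 0 -> X6 = 0 ->
  P = l1 * X1 + l2 * X2 + l3 * X3 + l4 * X4 + l5 * X5 + l6 * X6 -> P = 0.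
Proof. by move=> -> -> -> -> -> -> ->; rewrite !mulr0 !addr0. Qed.

Lemma toz (R : zmodType) (a b : R) : a = b -> a - b = 0.
Proof. by move=> ->; rewrite subrr. Qed.

Theorem lemma3p1 (R : realType) (f : int -> int -> R[i]) :
  (forall m n : int, f m n - f n m = (n - m)%:~R) ->
  (forall m n l : int,
      (n - m)%:~R * f (m + n) l = f n l * f m (n + l) - f m l * f n (m + l)) ->
  forall m : int, f m 0 = f 0 0.
Proof.
move=> H1 H2 m.
pose M : R[i] := m%:~R.
pose F a b := f (a * m) (b * m).
have H1F : forall a b, F a b - F b a = (b - a)%:~R * M.
  by move=> a b; rewrite /F H1 -mulrBl intrM.
have H2F : forall a b l, ((b - a)%:~R * M) * F (a + b) l
    = F b l * F a (b + l) - F a l * F b (a + l).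
  by move=> a b l; rewrite /F !mulrDl /M -intrM mulrBl H2.
pose c := F 0 0.
have Fc : c = f 0 0 by rewrite /c /F mul0r.
have A : forall k, F 0 k = F k 0 + k%:~R * M.
  move=> k; have := H1F 0 k; rewrite subr0 => h; by rewrite -h addrC subrK.
have E : forall n l, F n l * (F (n + l) 0 - F l 0) = 0.
  move=> n l; have := H2F 0 n l; rewrite !add0r subr0 !A => /toz h.
  apply: (@lc1 _ _ _ (-1) h); rewrite intrD; ring.
have C : forall n, F n 0 * (F n 0 - c) = 0.
  by move=> n; have := E n 0; rewrite addr0.
have D : forall a b, (b - a)%:~R * M * F (a + b) 0 = F b 0 * F a b - F a 0 * F b a.
  by move=> a b; have := H2F a b 0; rewrite !addr0.
have g1 : F 1 0 = f m 0 by rewrite /F mul1r mul0r.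
rewrite -g1 -Fc.
have := C 1; move/eqP; rewrite mulf_eq0 => /orP [/eqP g10 | ]; last by rewrite subr_eq0 => /eqP.
have [->|cn0] := eqVneq c 0; first by [].
have [m0|mn0] := eqVneq m 0.
  by rewrite /F /c m0 !mulr0.
have Mn0 : M != 0 by rewrite /M intr_eq0.
exfalso.
have gc : forall n, F n 0 != 0 -> F n 0 = c.
  move=> n hn; have := C n; move/eqP; rewrite mulf_eq0 (negPf hn) /= subr_eq0.
  by move/eqP.
have Lneg : forall p, p != 0 -> F p 0 = 0 -> F (- p) 0 = c.
  move=> p pn0 gp; apply: gc; apply/eqP => gnp.
  have := D p (- p); rewrite gp gnp subrr mul0r mul0r subrr => /eqP.
  rewrite -/c !mulf_eq0 (negPf cn0) (negPf Mn0) orbF intr_eq0.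
  by rewrite -opprD oppr_eq0 -mulr2n mulrn_eq0 /= (negPf pn0).
have Z0 : forall p q, p != q -> F p 0 = 0 -> F q 0 = 0 -> F (p + q) 0 = 0.
  move=> p q pq gp gq; have := D p q; rewrite gp gq !mul0r subrr => /eqP.
  rewrite !mulf_eq0 (negPf Mn0) orbF intr_eq0 subr_eq0 eq_sym (negPf pq) /=.
  by move/eqP.
have Mx0 : forall p q, F p 0 = 0 -> F q 0 = c -> F (p + q) 0 = 0 ->
    F p q = 0 /\ F q p = (p - q)%:~R * M.
  move=> p q gp gq gs.
  have h := E p q; rewrite gs gq sub0r mulrN in h.
  move/eqP: h; rewrite oppr_eq0 mulf_eq0 (negPf cn0) orbF => /eqP h; split => //.
  have := H1F p q; rewrite h sub0r => h'.
  by rewrite -[F q p]opprK h' -mulNr -rmorphN opprB.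
have Mxc : forall p q, F p 0 = 0 -> F q 0 = c -> F (p + q) 0 = c ->
    F q p = 0 /\ F p q = (q - p)%:~R * M.
  move=> p q gp gq gs.
  have h := E q p; rewrite [q + p]addrC gs gp subr0 in h.
  move/eqP: h; rewrite mulf_eq0 (negPf cn0) orbF => /eqP h; split => //.
  by have := H1F p q; rewrite h subr0.
have g0 : F 0 0 = c by [].
have gm1 : F (-1) 0 = c by apply: Lneg.
have Fm11 := Mxc 1 (-1) g10 gm1 g0.
have g2 : F 2 0 = 0.
  have e := H2F (-1) 1 1.
  have e' : (2%:~R * M) * F 0 1 = F 1 1 * F (-1) 2 - F (-1) 1 * F 1 0 by exact: e.
  rewrite A g10 add0r (proj1 Fm11) mul0r subr0 in e'.
  have h1 := E 1 1; have h2 := E (-1) 2.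
  have h1' : F 1 1 * (F 2 0 - F 1 0) = 0 by exact: h1.
  have h2' : F (-1) 2 * (F 1 0 - F 2 0) = 0 by exact: h2.
  rewrite g10 subr0 in h1'; rewrite g10 sub0r mulrN in h2'.
  case: (eqVneq (F 2 0) 0) => // g2n; exfalso.
  move/eqP: h1'; rewrite mulf_eq0 (negPf g2n) orbF => /eqP h1'.
  rewrite h1' mul0r in e'; move/eqP: e'; rewrite !mulf_eq0 (negPf Mn0) !intr_eq0.
  by [].
have g3 : F 3 0 = 0 by exact: (Z0 1 2).
have gm2 : F (-2) 0 = c by exact: (Lneg 2).
have gm3 : F (-3) 0 = c by exact: (Lneg 3).
have [_ m12] := Mxc 1 (-2) g10 gm2 gm1.
have [_ m22] := Mxc 2 (-2) g2 gm2 g0.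
have [m32 _] := Mx0 3 (-2) g3 gm2 g10.
have [m11a m11b] := Fm11.
have [_ m33] := Mxc 3 (-3) g3 gm3 g0.
have [_ m13] := Mxc 1 (-3) g10 gm3 gm2.
have [m21 _] := Mx0 2 (-1) g2 gm1 g10.
have [_ m23] := Mxc 2 (-3) g2 gm3 gm1.
have e1 : (3 - -1)%:~R * M * F 2 (-2) = F 3 (-2) * F (-1) 1 - F (-1) (-2) * F 3 (-3)
  by exact: (H2F (-1) 3 (-2)).
have e2 : (2 - -1)%:~R * M * F 1 (-1) = F 2 (-1) * F (-1) 1 - F (-1) (-1) * F 2 (-2)
  by exact: (H2F (-1) 2 (-1)).
have e3 : (-1 - 1)%:~R * M * F 0 (-2) = F (-1) (-2) * F 1 (-3) - F 1 (-2) * F (-1) (-1)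
  by exact: (H2F 1 (-1) (-2)).
have e4 : (0 - 1)%:~R * M * F 1 (-2) = F 0 (-2) * F 1 (-2) - F 1 (-2) * F 0 (-1)
  by exact: (H2F 1 0 (-2)).
have e5 : (-1 - 2)%:~R * M * F 1 (-2) = F (-1) (-2) * F 2 (-3) - F 2 (-2) * F (-1) 0
  by exact: (H2F 2 (-1) (-2)).
have e6 : (1 - -1)%:~R * M * F 0 (-1) = F 1 (-1) * F (-1) 0 - F (-1) (-1) * F 1 (-2)
  by exact: (H2F (-1) 1 (-1)).
rewrite m22 m32 m11a m33 in e1.
rewrite m11b m21 m11a m22 in e2.
rewrite m13 m12 in e3.
rewrite m12 in e4.
rewrite m12 m23 m22 in e5.
rewrite m11b m12 in e6.
move/toz: e1 => e1; move/toz: e2 => e2; move/toz: e3 => e3.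
move/toz: e4 => e4; move/toz: e5 => e5; move/toz: e6 => e6.
have := @lc6 _ (-13) 18 (-12) (-8) (-6) (-12) _ _ _ _ _ _ (22%:R * (M * M))
  e1 e2 e3 e4 e5 e6.
move=> h; have {h} := h ltac:(ring).
move/eqP; rewrite !mulf_eq0 (negPf Mn0) pnatr_eq0.
by [].
Qed.
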